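(* Let $\mathscr C$ be an embedded circle pattern for a graph $G$ and an admissible labelling $\alpha:E(G)\to[\alpha_0,\pi)$ with $0<\alpha_0\le\pi/2$, with radius function $r$. Define conductances $\mu([v_0,v_1])=\frac{\sin\alpha([v_0,v_1])}{\cosh(\log r(v_1)-\log r(v_0))-\cos\alpha([v_0,v_1])}$. Then there is a constant $C_5=C_5(\alpha_0)$ such that $\sum_{e=[v,w]}\mu(e)\le C_5$ for all interior vertices $v\in V$, the sum being over all edges incident to $v$.
   Context: $G$ is the graph on the white vertices of a b-quad-graph (a strongly regular cell decomposition into quadrilaterals with bipartite 1-skeleton), adjacent iff incident to a common face. Admissible labelling: at each interior black vertex the labels of incident faces sum to $2\pi$. A circle pattern: circles $\mathscr C(v)$ of radius $r(v)$ such that circles of adjacent vertices intersect with exterior intersection angle $\alpha$ (angle at an intersection point between the radii to the two centers), together with equally oriented kites formed by the two centers and the two intersection points, locally isomorphic to the b-quad-graph at interior vertices; embedded means the kites have disjoint interiors and meet in an edge/vertex iff the corresponding faces do. (The conductance equals the ratio of the distance between the two intersection points to the distance between the two centers.) *)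

(* Defs.v *)
From Stdlib Require Import Reals List.
Open Scope R_scope.

Inductive corner : Set := c0 | c1 | c2 | c3.
Definition csucc (c : corner) : corner :=
  match c with c0 => c1 | c1 => c2 | c2 => c3 | c3 => c0 end.
Definition cpred (c : corner) : corner :=
  match c with c0 => c3 | c1 => c0 | c2 => c1 | c3 => c2 end.

(* A b-quad-graph is given by a vertex type V with a colouring
   [white : V -> bool] and a face type F; face [f] has boundary cycle
   [fv f c0, fv f c1, fv f c2, fv f c3] (positively oriented), with
   [fv f c0], [fv f c2] white and [fv f c1], [fv f c3] black. *)

Definition in_face {V F : Type} (fv : F -> corner -> V) (f : F) (x : V) : Prop :=
  exists i, fv f i = x.

Definition edge_of {V F : Type} (fv : F -> corner -> V) (f : F) (x y : V) : Prop :=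
  exists i, (fv f i = x /\ fv f (csucc i) = y) \/ (fv f i = y /\ fv f (csucc i) = x).

Definition is_bquad_graph {V F : Type} (white : V -> bool)
    (fv : F -> corner -> V) : Prop :=
  (forall f, white (fv f c0) = true /\ white (fv f c2) = true /\
             white (fv f c1) = false /\ white (fv f c3) = false) /\
  (forall f i j, fv f i = fv f j -> i = j) /\
  (* coherent orientation: a directed edge is traversed by at most one face *)
  (forall f g i j, fv f i = fv g j -> fv f (csucc i) = fv g (csucc j) -> f = g) /\
  (* strong regularity: two distinct faces meet in nothing, a vertex or an edge *)
  (forall f g x y, f <> g -> in_face fv f x -> in_face fv g x ->
     in_face fv f y -> in_face fv g y -> x <> y ->
     edge_of fv f x y /\ edge_of fv g x y).

(* [star fv x fs ys]: x is an interior vertex; [fs] lists (without repetition)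
   all the faces incident to x in cyclic order, and [ys] the neighbours of x
   in the b-quad-graph, face [fs_k] being (x, ys_k, _, ys_(k+1)) in its
   positive cyclic order. *)
Definition star {V F : Type} (fv : F -> corner -> V) (x : V)
    (fs : list F) (ys : list V) : Prop :=
  (1 <= length fs)%nat /\ length ys = length fs /\ NoDup fs /\ NoDup ys /\
  (forall f, in_face fv f x -> In f fs) /\
  (forall k f, nth_error fs k = Some f ->
     exists i, fv f i = x /\
       nth_error ys k = Some (fv f (csucc i)) /\
       nth_error ys ((k + 1) mod length fs) = Some (fv f (cpred i))).

Definition interior_vertex {V F : Type} (fv : F -> corner -> V) (x : V) : Prop :=
  exists fs ys, star fv x fs ys.

Definition pt : Type := (R * R)%type.
Definition psub (a b : pt) : pt := (fst a - fst b, snd a - snd b).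
Definition dot (a b : pt) : R := fst a * fst b + snd a * snd b.
Definition dist2 (a b : pt) : R := dot (psub a b) (psub a b).
(* twice the signed area of the triangle (a,b,c) *)
Definition orient (a b c : pt) : R :=
  (fst b - fst a) * (snd c - snd a) - (snd b - snd a) * (fst c - fst a).

Definition closed_tri (a b c z : pt) : Prop :=
  exists l1 l2 l3, 0 <= l1 /\ 0 <= l2 /\ 0 <= l3 /\ l1 + l2 + l3 = 1 /\
    z = (l1 * fst a + l2 * fst b + l3 * fst c, l1 * snd a + l2 * snd b + l3 * snd c).
Definition open_tri (a b c z : pt) : Prop :=
  exists l1 l2 l3, 0 < l1 /\ 0 < l2 /\ 0 < l3 /\ l1 + l2 + l3 = 1 /\
    z = (l1 * fst a + l2 * fst b + l3 * fst c, l1 * snd a + l2 * snd b + l3 * snd c).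
Definition closed_seg (a b z : pt) : Prop :=
  exists t, 0 <= t <= 1 /\ z = ((1 - t) * fst a + t * fst b, (1 - t) * snd a + t * snd b).
Definition open_seg (a b z : pt) : Prop :=
  exists t, 0 < t < 1 /\ z = ((1 - t) * fst a + t * fst b, (1 - t) * snd a + t * snd b).

(* [pos] places white vertices at the circle centres and black vertices at the
   intersection points; [r] is the radius function (on white vertices). *)

(* The kite of face f is the quadrilateral (pos v, pos b, pos w, pos b'),
   i.e. the union of the triangles (v,b,w) and (v,w,b') which lie on opposite
   sides of the diagonal vw. *)
Definition closed_kite {V F : Type} (fv : F -> corner -> V) (pos : V -> pt)
    (f : F) (z : pt) : Prop :=
  closed_tri (pos (fv f c0)) (pos (fv f c1)) (pos (fv f c2)) z \/
  closed_tri (pos (fv f c0)) (pos (fv f c2)) (pos (fv f c3)) z.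
Definition open_kite {V F : Type} (fv : F -> corner -> V) (pos : V -> pt)
    (f : F) (z : pt) : Prop :=
  open_tri (pos (fv f c0)) (pos (fv f c1)) (pos (fv f c2)) z \/
  open_tri (pos (fv f c0)) (pos (fv f c2)) (pos (fv f c3)) z \/
  open_seg (pos (fv f c0)) (pos (fv f c2)) z.

Definition circle_pattern {V F : Type} (white : V -> bool)
    (fv : F -> corner -> V) (alpha : F -> R) (pos : V -> pt) (r : V -> R) : Prop :=
  (forall x, white x = true -> 0 < r x) /\
  (* for each face, the black vertices are intersection points of the circles
     of the two white vertices, with angle alpha between the radii *)
  (forall f b, (b = fv f c1 \/ b = fv f c3) ->
     dist2 (pos b) (pos (fv f c0)) = r (fv f c0) ^ 2 /\
     dist2 (pos b) (pos (fv f c2)) = r (fv f c2) ^ 2 /\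
     dot (psub (pos (fv f c0)) (pos b)) (psub (pos (fv f c2)) (pos b))
       = r (fv f c0) * r (fv f c2) * cos (alpha f)) /\
  (* equally oriented (non-degenerate) kites *)
  (exists s, (s = 1 \/ s = -1) /\
     forall f, 0 < s * orient (pos (fv f c0)) (pos (fv f c1)) (pos (fv f c2)) /\
               0 < s * orient (pos (fv f c0)) (pos (fv f c2)) (pos (fv f c3))).

Definition common_part {V F : Type} (fv : F -> corner -> V) (pos : V -> pt)
    (f g : F) (z : pt) : Prop :=
  (exists i, in_face fv g (fv f i) /\ z = pos (fv f i)) \/
  (exists i, edge_of fv g (fv f i) (fv f (csucc i)) /\
             closed_seg (pos (fv f i)) (pos (fv f (csucc i))) z).

Definition embedded {V F : Type} (fv : F -> corner -> V) (pos : V -> pt) : Prop :=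
  forall f g, f <> g ->
    (forall z, ~ (open_kite fv pos f z /\ open_kite fv pos g z)) /\
    (forall z, (closed_kite fv pos f z /\ closed_kite fv pos g z) <->
               common_part fv pos f g z).

Definition sumR (l : list R) : R := fold_right Rplus 0 l.

Definition admissible {V F : Type} (white : V -> bool) (fv : F -> corner -> V)
    (alpha0 : R) (alpha : F -> R) : Prop :=
  (forall f, alpha0 <= alpha f < PI) /\
  (forall b fs ys, white b = false -> star fv b fs ys ->
     sumR (map alpha fs) = 2 * PI).

(* conductance of the G-edge [fv f c0, fv f c2] corresponding to face f *)
Definition conductance {V F : Type} (fv : F -> corner -> V) (alpha : F -> R)
    (r : V -> R) (f : F) : R :=
  sin (alpha f) /
    (cosh (ln (r (fv f c2)) - ln (r (fv f c0))) - cos (alpha f)).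

(* Main.v *)
Require Import Defs.
From Stdlib Require Import Reals List Lra Lia Psatz ClassicalEpsilon.
Open Scope R_scope.

Fixpoint sumn (M : nat) (g : nat -> R) : R :=
  match M with O => 0 | S m => sumn m g + g m end.

Lemma sumn_ge0 M g : (forall j, 0 <= g j) -> 0 <= sumn M g.
Proof. intros H; induction M; simpl; [lra| specialize (H M); lra]. Qed.

Lemma sumn_le M g h : (forall j, g j <= h j) -> sumn M g <= sumn M h.
Proof. intros H; induction M; simpl; [lra| specialize (H M); lra]. Qed.

Lemma sumn_plus M g h : sumn M (fun j => g j + h j) = sumn M g + sumn M h.
Proof. induction M; simpl; [lra| rewrite IHM; lra]. Qed.

Definition iind (x y : R) (j : nat) : R :=
  if Rlt_dec x (INR j) then if Rlt_dec (INR j) (x + y) then 1 else 0 else 0.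

Lemma iind_ge0 x y j : 0 <= iind x y j.
Proof. unfold iind; destruct Rlt_dec; [destruct Rlt_dec|]; lra. Qed.

Lemma count_lb x y : 0 <= x -> forall M,
  Rmin (INR M) (x + y) - x - 1 <= sumn M (iind x y).
Proof.
  intros Hx M; induction M.
  - simpl. unfold Rmin; destruct Rle_dec; lra.
  - simpl sumn. rewrite S_INR.
    pose proof (sumn_ge0 M (iind x y) (iind_ge0 x y)).
    destruct (Rle_dec (INR M) x).
    + pose proof (Rmin_l (INR M + 1) (x+y)). pose proof (iind_ge0 x y M). lra.
    + destruct (Rlt_dec (INR M) (x + y)).
      * assert (iind x y M = 1) by (unfold iind; do 2 (destruct Rlt_dec; try lra)).
        rewrite Rmin_left in IHM by lra.
        pose proof (Rmin_l (INR M + 1) (x+y)). lra.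
      * rewrite Rmin_right in IHM by lra. rewrite Rmin_right by lra.
        pose proof (iind_ge0 x y M). lra.
Qed.

Definition cross (p q : pt) : R := fst p * snd q - snd p * fst q.
Definition nrm (p : pt) : R := sqrt (dot p p).

Lemma polar (p : pt) : 0 < dot p p -> exists b, 0 <= b < 2 * PI /\
  fst p = nrm p * cos b /\ snd p = nrm p * sin b.
Proof.
  intros Hp. destruct p as [a c]. unfold nrm, dot in *; simpl in *.
  set (n := sqrt (a * a + c * c)).
  assert (Hn : 0 < n) by (apply sqrt_lt_R0; lra).
  assert (Hn2 : n * n = a * a + c * c) by (apply sqrt_sqrt; lra).
  set (x := a / n).
  assert (Hx2 : x * x + (c / n) * (c / n) = 1).
  { unfold x. replace ((a/n)*(a/n) + (c/n)*(c/n)) with ((a*a+c*c)/(n*n)) by (field; lra). rewrite <- Hn2. field. lra. }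
  assert (Hxb : -1 <= x <= 1) by nra.
  assert (Ha : a = n * x) by (unfold x; field; lra).
  assert (Hs : sqrt (1 - x²) = Rabs (c / n)).
  { rewrite <- sqrt_Rsqr_abs. f_equal. unfold Rsqr. lra. }
  destruct (Rle_dec 0 c).
  - exists (acos x). pose proof (acos_bound x). pose proof PI_RGT_0.
    split; [lra|]. split.
    + rewrite cos_acos by lra. exact Ha.
    + rewrite sin_acos by lra. rewrite Hs. rewrite Rabs_right.
      * field; lra.
      * apply Rle_ge. unfold Rdiv. apply Rmult_le_pos; [lra| left; apply Rinv_0_lt_compat; lra].
  - assert (x <> 1 /\ x <> -1).
    { assert (0 < (c/n) * (c/n)).
      { assert (c / n <> 0). { intro H0. unfold Rdiv in H0. apply Rmult_integral in H0.
          destruct H0 as [H0|H0]; [lra| apply Rinv_neq_0_compat in H0; lra]. }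
        nra. }
      split; intro Hq; rewrite Hq in Hx2; nra. }
    pose proof (acos_bound_lt x ltac:(lra)).
    exists (2 * PI - acos x). split; [lra|]. split.
    + rewrite cos_minus, cos_2PI, sin_2PI, cos_acos by lra. rewrite Ha; ring.
    + rewrite sin_minus, cos_2PI, sin_2PI, sin_acos by lra. rewrite Hs.
      rewrite Rabs_left.
      * field; lra.
      * unfold Rdiv. apply Rmult_neg_pos; [lra| apply Rinv_0_lt_compat; lra].
Qed.
Definition dir (N j : nat) : pt :=
  (cos (2 * PI * INR j / INR N), sin (2 * PI * INR j / INR N)).
Definition cone_ind (p q d : pt) : R :=
  if Rlt_dec 0 (cross p d) then if Rlt_dec 0 (cross d q) then 1 else 0 else 0.

Lemma sin_p2 x : sin (x + 2 * PI) = sin x.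
Proof. rewrite sin_plus, cos_2PI, sin_2PI; ring. Qed.

Lemma cone_count p q N : (1 <= N)%nat -> 0 < cross p q ->
  INR N * (cross p q / (nrm p * nrm q)) / (2 * PI) - 1
  <= sumn (2 * N) (fun j => cone_ind p q (dir N j)).
Proof.
  intros HN Hc.
  assert (HNr : 1 <= INR N) by (apply (le_INR 1); lia).
  pose proof PI_RGT_0 as Hpi.
  assert (Hp : 0 < dot p p).
  { destruct p as [a b], q as [c d]; unfold cross, dot in *; simpl in *.
    destruct (Req_dec a 0); destruct (Req_dec b 0); try nra; subst; lra. }
  assert (Hq : 0 < dot q q).
  { destruct p as [a b], q as [c d]; unfold cross, dot in *; simpl in *.
    destruct (Req_dec c 0); destruct (Req_dec d 0); try nra; subst; lra. }
  destruct (polar p Hp) as [be [Hbe [Hp1 Hp2]]].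
  destruct (polar q Hq) as [ga [Hga [Hq1 Hq2]]].
  assert (Hnp : 0 < nrm p) by (apply sqrt_lt_R0; lra).
  assert (Hnq : 0 < nrm q) by (apply sqrt_lt_R0; lra).
  assert (Hcr : cross p q = nrm p * nrm q * sin (ga - be)).
  { unfold cross. rewrite Hp1, Hp2, Hq1, Hq2, sin_minus. ring. }
  set (th := if Rlt_dec be ga then ga - be else ga - be + 2 * PI).
  assert (Hsth : sin th = sin (ga - be)).
  { unfold th; destruct Rlt_dec; [reflexivity| apply sin_p2]. }
  assert (Hs : cross p q / (nrm p * nrm q) = sin th).
  { rewrite Hsth, Hcr. field. lra. }
  assert (Hsp : 0 < sin th).
  { rewrite <- Hs. apply Rdiv_lt_0_compat; [lra| apply Rmult_lt_0_compat; lra]. }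
  assert (Hth : 0 < th < PI).
  { assert (0 <= th <= 2 * PI).
    { unfold th; destruct Rlt_dec; lra. }
    assert (th <> 0) by (intro H0; rewrite H0, sin_0 in Hsp; lra).
    split; [lra|]. destruct (Rlt_dec th PI); [assumption|].
    pose proof (sin_le_0 th ltac:(lra) ltac:(lra)). lra. }
  rewrite Hs.
  set (x := INR N * be / (2 * PI)).
  set (y := INR N * th / (2 * PI)).
  assert (Hx : 0 <= x).
  { unfold x. apply Rmult_le_pos; [apply Rmult_le_pos; lra|].
    left; apply Rinv_0_lt_compat; lra. }
  pose proof (count_lb x y Hx (2 * N)) as Hcl.
  rewrite Rmin_right in Hcl.
  2:{ rewrite mult_INR. unfold x, y. simpl INR.
      replace (INR N * be / (2 * PI) + INR N * th / (2 * PI))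
        with (INR N * ((be + th) / (2 * PI))) by (field; lra).
      assert ((be + th) / (2 * PI) <= 2).
      { apply (Rmult_le_reg_r (2 * PI)); [lra|].
        unfold Rdiv. rewrite Rmult_assoc, Rinv_l by lra. lra. }
      nra. }
  assert (Hy : INR N * sin th / (2 * PI) - 1 <= y - 1).
  { unfold y. pose proof (sin_lt_x th ltac:(lra)).
    unfold Rdiv. apply Rplus_le_compat_r. apply Rmult_le_compat_r.
    - left; apply Rinv_0_lt_compat; lra.
    - apply Rmult_le_compat_l; lra. }
  eapply Rle_trans; [exact Hy|]. eapply Rle_trans; [|apply sumn_le].
  { replace (x + y - x - 1) with (y - 1) in Hcl by ring. exact Hcl. }
  intro j. unfold iind, cone_ind.
  destruct (Rlt_dec x (INR j)) as [H1|H1]; [|repeat destruct Rlt_dec; lra].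
  destruct (Rlt_dec (INR j) (x + y)) as [H2|H2]; [|repeat destruct Rlt_dec; lra].
  set (ph := 2 * PI * INR j / INR N).
  assert (Hph1 : be < ph).
  { assert (0 < 2 * PI / INR N * (INR j - x)).
    { apply Rmult_lt_0_compat; [apply Rdiv_lt_0_compat; lra| lra]. }
    assert (ph - be = 2 * PI / INR N * (INR j - x)) by (unfold ph, x; field; lra). lra. }
  assert (Hph2 : ph < be + th).
  { assert (be + th - ph = 2 * PI / INR N * (x + y - INR j)) by (unfold ph, x, y; field; lra).
    assert (0 < 2 * PI / INR N * (x + y - INR j)).
    { apply Rmult_lt_0_compat; [apply Rdiv_lt_0_compat; lra| lra]. }
    lra. }
  unfold dir. fold ph.
  assert (C1 : 0 < cross p (cos ph, sin ph)).
  { unfold cross; simpl. rewrite Hp1, Hp2.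
    replace (nrm p * cos be * sin ph - nrm p * sin be * cos ph) with (nrm p * sin (ph - be))
      by (rewrite sin_minus; ring).
    apply Rmult_lt_0_compat; [lra|]. apply sin_gt_0; lra. }
  assert (C2 : 0 < cross (cos ph, sin ph) q).
  { unfold cross; simpl. rewrite Hq1, Hq2.
    replace (cos ph * (nrm q * sin ga) - sin ph * (nrm q * cos ga)) with (nrm q * sin (ga - ph))
      by (rewrite sin_minus; ring).
    apply Rmult_lt_0_compat; [lra|].
    assert (sin (ga - ph) = sin (be + th - ph)).
    { unfold th; destruct Rlt_dec.
      - f_equal; ring.
      - replace (be + (ga - be + 2 * PI) - ph) with ((ga - ph) + 2 * PI) by ring.
        rewrite sin_p2; reflexivity. }
    rewrite H. apply sin_gt_0; lra. }
  destruct (Rlt_dec 0 (cross p (cos ph, sin ph))); [|lra].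
  destruct (Rlt_dec 0 (cross (cos ph, sin ph) q)); lra.
Qed.

Lemma tri_cone (v P Q d : pt) : 0 < cross (psub P v) (psub Q v) ->
  0 < cross (psub P v) d -> 0 < cross d (psub Q v) ->
  exists e0, 0 < e0 /\ forall e, 0 < e < e0 ->
    open_tri v P Q (fst v + e * fst d, snd v + e * snd d).
Proof.
  destruct v as [v1 v2], P as [p1 p2], Q as [q1 q2], d as [d1 d2].
  unfold cross, psub; simpl. intros Hc H1 H2.
  set (c := (p1 - v1) * (q2 - v2) - (p2 - v2) * (q1 - v1)) in *.
  set (la := (d1 * (q2 - v2) - d2 * (q1 - v1)) / c).
  set (mu := ((p1 - v1) * d2 - (p2 - v2) * d1) / c).
  assert (Hla : 0 < la) by (apply Rdiv_lt_0_compat; lra).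
  assert (Hmu : 0 < mu) by (apply Rdiv_lt_0_compat; lra).
  exists (/ (la + mu)). split; [apply Rinv_0_lt_compat; lra|].
  intros e [He1 He2].
  assert (e * (la + mu) < 1).
  { apply (Rmult_lt_compat_r (la + mu)) in He2; [|lra].
    rewrite Rinv_l in He2 by lra. exact He2. }
  exists (1 - e * la - e * mu), (e * la), (e * mu).
  split; [lra|]. split; [nra|]. split; [nra|]. split; [ring|].
  unfold la, mu. unfold c in *. simpl. f_equal; field; lra.
Qed.

Lemma open_tri_cyc a b c z : open_tri a b c z -> open_tri b c a z.
Proof.
  intros [l1 [l2 [l3 [H1 [H2 [H3 [H4 H5]]]]]]].
  exists l2, l3, l1. repeat split; try lra. rewrite H5. f_equal; ring.
Qed.

Lemma open_tri_sw a b c z : open_tri a b c z -> open_tri a c b z.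
Proof.
  intros [l1 [l2 [l3 [H1 [H2 [H3 [H4 H5]]]]]]].
  exists l1, l3, l2. repeat split; try lra. rewrite H5. f_equal; ring.
Qed.

Lemma angle_bound R S al a0 : 0 < R -> 0 < S -> 0 < a0 <= PI / 2 -> a0 <= al < PI ->
  R ^ 2 * sin a0 ^ 2 <= R ^ 2 + S ^ 2 - 2 * R * S * cos al.
Proof.
  intros HR HS Ha0 Hal.
  pose proof (sin2_cos2 al) as E. unfold Rsqr in E.
  pose proof (SIN_bound a0).
  destruct (Rle_dec (cos al) 0).
  - assert (sin a0 ^ 2 <= 1) by nra. assert (0 <= R * S * (- cos al)) by (apply Rmult_le_pos; nra). nra.
  - assert (al < PI / 2).
    { destruct (Rlt_dec al (PI / 2)); [assumption|].
      pose proof PI_RGT_0. pose proof (cos_le_0 al ltac:(lra) ltac:(lra)). lra. }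
    pose proof PI_RGT_0.
    assert (sin a0 <= sin al) by (apply sin_incr_1; lra).
    assert (0 <= sin a0) by (apply sin_ge_0; lra).
    assert (sin a0 ^ 2 <= sin al ^ 2) by nra.
    assert (R ^ 2 + S ^ 2 - 2 * R * S * cos al = (S - R * cos al) ^ 2 + R ^ 2 * sin al ^ 2) by nra.
    assert (0 <= R ^ 2 * (sin al ^ 2 - sin a0 ^ 2)) by (apply Rmult_le_pos; nra).
    assert (0 <= (S - R * cos al) ^ 2) by apply pow2_ge_0. lra.
Qed.

Lemma close_bound mu o R D N cnt a0 : 0 < R -> 0 < D -> 0 < sin a0 -> 1 <= N ->
  mu = 2 * Rabs o / D -> R ^ 2 * sin a0 ^ 2 <= D ->
  N * (Rabs o / (R * sqrt D)) / (2 * PI) - 1 <= cnt ->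
  mu <= 4 * PI / (N * sin a0) * (cnt + 1).
Proof.
  intros HR HD Hs HN Hmu HRD Hc.
  pose proof PI_RGT_0.
  set (t := sqrt D) in *.
  assert (Ht : 0 < t) by (apply sqrt_lt_R0; lra).
  assert (Ht2 : t * t = D) by (apply sqrt_sqrt; lra).
  set (S := Rabs o / (R * t)) in *.
  assert (HS : 0 <= S).
  { unfold S. apply Rmult_le_pos; [apply Rabs_pos| left; apply Rinv_0_lt_compat; nra]. }
  assert (HS2 : S <= 2 * PI * (cnt + 1) / N).
  { apply (Rmult_le_reg_r (N / (2 * PI))). { apply Rdiv_lt_0_compat; lra. }
    replace (2 * PI * (cnt + 1) / N * (N / (2 * PI))) with (cnt + 1) by (field; lra).
    replace (S * (N / (2 * PI))) with (N * S / (2 * PI)) by (field; lra). lra. }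
  assert (HRt : R * sin a0 <= t) by nra.
  assert (Hmu2 : mu = 2 * S * R / t) by (rewrite Hmu; unfold S; rewrite <- Ht2; field; lra).
  rewrite Hmu2.
  assert (R / t <= / sin a0).
  { apply (Rmult_le_reg_r (t * sin a0)); [nra|].
    replace (R / t * (t * sin a0)) with (R * sin a0) by (field; lra).
    replace (/ sin a0 * (t * sin a0)) with t by (field; lra). lra. }
  replace (2 * S * R / t) with (2 * S * (R / t)) by (field; lra).
  apply Rle_trans with (2 * S * / sin a0).
  { apply Rmult_le_compat_l; nra. }
  replace (4 * PI / (N * sin a0) * (cnt + 1)) with (2 * (2 * PI * (cnt + 1) / N) * / sin a0)
    by (field; lra).
  apply Rmult_le_compat_r; [left; apply Rinv_0_lt_compat; lra| lra].
Qed.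

Lemma cond_formula R0 R2 al : 0 < R0 -> 0 < R2 ->
  0 < R0 ^ 2 + R2 ^ 2 - 2 * R0 * R2 * cos al ->
  sin al / (cosh (ln R2 - ln R0) - cos al) =
  2 * R0 * R2 * sin al / (R0 ^ 2 + R2 ^ 2 - 2 * R0 * R2 * cos al).
Proof.
  intros H0 H2 HD.
  assert (E : cosh (ln R2 - ln R0) = (R2 / R0 + R0 / R2) / 2).
  { unfold cosh.
    assert (E1 : exp (ln R2 - ln R0) = R2 / R0).
    { unfold Rminus. rewrite exp_plus, exp_Ropp, !exp_ln by lra. reflexivity. }
    assert (E2 : exp (- (ln R2 - ln R0)) = R0 / R2).
    { rewrite exp_Ropp, E1. field; lra. }
    rewrite E1, E2. reflexivity. }
  rewrite E.
  replace ((R2 / R0 + R0 / R2) / 2 - cos al)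
    with ((R0 ^ 2 + R2 ^ 2 - 2 * R0 * R2 * cos al) / (2 * R0 * R2)) by (field; lra).
  field. split; lra.
Qed.

Lemma geo_alg (A B W : pt) R0 R2 al : dist2 B A = R0 ^ 2 -> dist2 B W = R2 ^ 2 ->
  dot (psub A B) (psub W B) = R0 * R2 * cos al -> 0 < R0 -> 0 < R2 -> 0 < sin al ->
  Rabs (orient A B W) = R0 * R2 * sin al /\
  dist2 A W = R0 ^ 2 + R2 ^ 2 - 2 * R0 * R2 * cos al.
Proof.
  destruct A as [a1 a2], B as [b1 b2], W as [w1 w2].
  unfold dist2, dot, psub, orient; cbn [fst snd]. intros E1 E2 E3 H0 H2 Hs.
  split; [|nra].
  set (o := (b1 - a1) * (w2 - a2) - (b2 - a2) * (w1 - a1)).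
  assert (Lag : o * o + (R0 * R2 * cos al) * (R0 * R2 * cos al) = R0 ^ 2 * R2 ^ 2).
  { rewrite <- E3, <- E1, <- E2. unfold o. ring. }
  pose proof (sin2_cos2 al) as Ec. unfold Rsqr in Ec.
  assert (Rabs o * Rabs o = (R0 * R2 * sin al) * (R0 * R2 * sin al)).
  { rewrite <- Rabs_mult, Rabs_right by nra. nra. }
  pose proof (Rabs_pos o).
  assert (0 < R0 * R2 * sin al) by (apply Rmult_lt_0_compat; [nra|lra]).
  nra.
Qed.

Lemma dist2_sym a b : dist2 a b = dist2 b a.
Proof. unfold dist2, dot, psub; simpl; ring. Qed.

Lemma nrm_psub a b R : 0 <= R -> dist2 a b = R ^ 2 -> nrm (psub a b) = R.
Proof. intros H E. unfold nrm. fold (dist2 a b). rewrite E. apply sqrt_pow2; auto. Qed.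

Definition Pin {V F : Type} (fv : F -> corner -> V) (pos : V -> pt) (v : V) (N j : nat) (f : F) : Prop :=
  exists e0, 0 < e0 /\ forall e, 0 < e < e0 ->
    open_tri (pos (fv f Defs.c0)) (pos (fv f Defs.c1)) (pos (fv f Defs.c2))
      (fst (pos v) + e * fst (dir N j), snd (pos v) + e * snd (dir N j)).

Definition ind {V F : Type} (fv : F -> corner -> V) (pos : V -> pt) (v : V) (N : nat) (f : F) (j : nat) : R :=
  if excluded_middle_informative (Pin fv pos v N j f) then 1 else 0.

Lemma ind_ge0 {V F : Type} fv pos (v : V) N (f : F) j : 0 <= ind fv pos v N f j.
Proof. unfold ind; destruct excluded_middle_informative; lra. Qed.

Lemma cnt_from_cone {V F : Type} fv pos (v : V) N (f : F) p q : (1 <= N)%nat ->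
  0 < cross p q ->
  (forall j, 0 < cross p (dir N j) -> 0 < cross (dir N j) q -> Pin fv pos v N j f) ->
  INR N * (cross p q / (nrm p * nrm q)) / (2 * PI) - 1 <= sumn (2 * N) (ind fv pos v N f).
Proof.
  intros HN Hc Himp. eapply Rle_trans; [apply cone_count; assumption|].
  apply sumn_le. intro j. unfold cone_ind.
  destruct (Rlt_dec 0 (cross p (dir N j))) as [H1|H1]; [|apply ind_ge0].
  destruct (Rlt_dec 0 (cross (dir N j) q)) as [H2|H2]; [|apply ind_ge0].
  unfold ind. destruct excluded_middle_informative as [|n]; [lra|].
  exfalso; apply n; auto.
Qed.

Lemma face_bound (alpha0 : R) (Ha0 : 0 < alpha0 <= PI / 2) (V F : Type) (white : V -> bool)
  (fv : F -> corner -> V) (pos : V -> pt) (r : V -> R) (alpha : F -> R) :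
  is_bquad_graph white fv -> admissible white fv alpha0 alpha ->
  circle_pattern white fv alpha pos r ->
  forall (v : V) (f : F) (N : nat), (1 <= N)%nat -> white v = true ->
  (exists i, fv f i = v) ->
  conductance fv alpha r f <=
    4 * PI / (INR N * sin alpha0) * (sumn (2 * N) (ind fv pos v N f) + 1).
Proof.
  intros hbq adm cp v f N HN Hwv [i Hi].
  destruct hbq as [Hcol _]. destruct (Hcol f) as [w0 [w2 [b1 b3]]].
  destruct adm as [Hal _]. destruct cp as [Hr [Hcirc [s [Hs Hor]]]].
  pose proof PI_RGT_0 as Hpi.
  assert (HNr : 1 <= INR N) by (apply (le_INR 1); lia).
  assert (Hsa0 : 0 < sin alpha0) by (apply sin_gt_0; lra).
  destruct (Hal f) as [Hal1 Hal2].
  assert (Hsal : 0 < sin (alpha f)) by (apply sin_gt_0; lra).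
  set (A := pos (fv f Defs.c0)). set (B := pos (fv f Defs.c1)). set (W := pos (fv f Defs.c2)).
  set (R0 := r (fv f Defs.c0)). set (R2 := r (fv f Defs.c2)).
  assert (HR0 : 0 < R0) by (apply Hr; auto).
  assert (HR2 : 0 < R2) by (apply Hr; auto).
  destruct (Hcirc f (fv f Defs.c1) (or_introl eq_refl)) as [E1 [E2 E3]].
  destruct (geo_alg A B W R0 R2 (alpha f) E1 E2 E3 HR0 HR2 Hsal) as [Ho HD].
  set (o := orient A B W) in *. set (D := dist2 A W) in *.
  assert (HDb0 : R0 ^ 2 * sin alpha0 ^ 2 <= D) by (rewrite HD; apply angle_bound; lra).
  assert (HDb2 : R2 ^ 2 * sin alpha0 ^ 2 <= D).
  { rewrite HD. replace (R0 ^ 2 + R2 ^ 2 - 2 * R0 * R2 * cos (alpha f))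
      with (R2 ^ 2 + R0 ^ 2 - 2 * R2 * R0 * cos (alpha f)) by ring. apply angle_bound; lra. }
  assert (HDp : 0 < D).
  { assert (0 < R0 ^ 2 * sin alpha0 ^ 2) by (apply Rmult_lt_0_compat; apply pow_lt; lra). lra. }
  assert (Hmu : conductance fv alpha r f = 2 * Rabs o / D).
  { unfold conductance. fold R0 R2. rewrite cond_formula by (try rewrite <- HD; lra).
    rewrite Ho, HD. field. rewrite <- HD. lra. }
  destruct (Hor f) as [Hor1 _]. fold A B W o in Hor1.
  assert (Ho0 : o <> 0) by (intro Hz; rewrite Hz in Hor1; lra).
  assert (HsD : 0 < sqrt D) by (apply sqrt_lt_R0; lra).
  destruct i; subst v.
  -
    apply (close_bound _ o R0 D); auto.
    assert (Hnp : nrm (psub B A) = R0) by (apply nrm_psub; [lra| exact E1]).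
    assert (Hnq : nrm (psub W A) = sqrt D) by (unfold nrm; fold (dist2 W A); rewrite dist2_sym; reflexivity).
    destruct (Rlt_dec 0 o) as [Hop|Hon].
    + rewrite Rabs_right by lra.
      assert (Hc : cross (psub B A) (psub W A) = o) by reflexivity.
      pose proof (cnt_from_cone fv pos (fv f Defs.c0) N f (psub B A) (psub W A) HN ltac:(lra)) as Hk.
      rewrite Hc, Hnp, Hnq in Hk. apply Hk.
      intros j C1 C2. destruct (tri_cone A B W (dir N j) ltac:(lra) C1 C2) as [e0 [He0 Hh]].
      exists e0; split; auto.
    + rewrite Rabs_left by lra.
      assert (Hc : cross (psub W A) (psub B A) = - o) by (unfold o, orient, cross; simpl; ring).
      pose proof (cnt_from_cone fv pos (fv f Defs.c0) N f (psub W A) (psub B A) HN ltac:(lra)) as Hk.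
      rewrite Hc, Hnp, Hnq in Hk.
      replace (R0 * sqrt D) with (sqrt D * R0) by ring. apply Hk.
      intros j C1 C2. destruct (tri_cone A W B (dir N j) ltac:(lra) C1 C2) as [e0 [He0 Hh]].
      exists e0; split; auto. intros e He. apply open_tri_sw. apply Hh; auto.
  - exfalso. rewrite Hwv in b1. discriminate.
  -
    apply (close_bound _ o R2 D); auto.
    assert (Hnp : nrm (psub B W) = R2) by (apply nrm_psub; [lra| exact E2]).
    assert (Hnq : nrm (psub A W) = sqrt D) by reflexivity.
    destruct (Rlt_dec 0 o) as [Hop|Hon].
    + rewrite Rabs_right by lra.
      assert (Hc : cross (psub A W) (psub B W) = o) by (unfold o, orient, cross; simpl; ring).
      pose proof (cnt_from_cone fv pos (fv f Defs.c2) N f (psub A W) (psub B W) HN ltac:(lra)) as Hk.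
      rewrite Hc, Hnp, Hnq in Hk.
      replace (R2 * sqrt D) with (sqrt D * R2) by ring. apply Hk.
      intros j C1 C2. destruct (tri_cone W A B (dir N j) ltac:(lra) C1 C2) as [e0 [He0 Hh]].
      exists e0; split; auto. intros e He. apply open_tri_cyc. apply Hh; auto.
    + rewrite Rabs_left by lra.
      assert (Hc : cross (psub B W) (psub A W) = - o) by (unfold o, orient, cross; simpl; ring).
      pose proof (cnt_from_cone fv pos (fv f Defs.c2) N f (psub B W) (psub A W) HN ltac:(lra)) as Hk.
      rewrite Hc, Hnp, Hnq in Hk. apply Hk.
      intros j C1 C2. destruct (tri_cone W B A (dir N j) ltac:(lra) C1 C2) as [e0 [He0 Hh]].
      exists e0; split; auto. intros e He. apply open_tri_cyc. apply open_tri_sw. apply Hh; auto.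
  - exfalso. rewrite Hwv in b3. discriminate.
Qed.

Lemma sumR_map_le {A : Type} (f g : A -> R) l : (forall x, In x l -> f x <= g x) ->
  sumR (map f l) <= sumR (map g l).
Proof.
  induction l; simpl; intros H; [lra|].
  pose proof (H a (or_introl eq_refl)). pose proof (IHl (fun x Hx => H x (or_intror Hx))). lra.
Qed.

Lemma sumR_affine {A : Type} (h : A -> R) K l :
  sumR (map (fun x => K * (h x + 1)) l) = K * (sumR (map h l) + INR (length l)).
Proof.
  induction l; [simpl; ring|]. simpl map; simpl sumR. simpl length. rewrite IHl, S_INR. ring.
Qed.

Lemma sumR_sumn {A : Type} (g : A -> nat -> R) M l :
  sumR (map (fun f => sumn M (g f)) l) = sumn M (fun j => sumR (map (fun f => g f j) l)).
Proof.
  induction l; simpl.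
  - induction M; simpl; [reflexivity| rewrite <- IHM; ring].
  - rewrite IHl. rewrite <- sumn_plus. reflexivity.
Qed.

Lemma sumn_const M : sumn M (fun _ => 1) = INR M.
Proof. induction M; [reflexivity| simpl sumn; rewrite IHM, S_INR; reflexivity]. Qed.

Definition chi (P : Prop) : R := if excluded_middle_informative P then 1 else 0.

Lemma sumR_zero {A : Type} (P : A -> Prop) l : (forall x, In x l -> ~ P x) ->
  sumR (map (fun f => chi (P f)) l) = 0.
Proof.
  induction l; simpl; intros H; [reflexivity|].
  unfold chi at 1. destruct excluded_middle_informative as [p|_].
  - exfalso; exact (H a (or_introl eq_refl) p).
  - rewrite IHl; [ring| intros x Hx; apply H; auto].
Qed.

Lemma at_most_one {A : Type} (P : A -> Prop) l : NoDup l ->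
  (forall f g, In f l -> In g l -> f <> g -> ~ (P f /\ P g)) ->
  sumR (map (fun f => chi (P f)) l) <= 1.
Proof.
  induction l as [|a l IH]; simpl; intros Hnd H; [lra|].
  inversion Hnd as [|? ? Hna Hnd']; subst.
  unfold chi at 1. destruct excluded_middle_informative as [p|_].
  - rewrite sumR_zero; [lra|]. intros x Hx Px.
    apply (H a x (or_introl eq_refl) (or_intror Hx)).
    + intro; subst; contradiction.
    + auto.
  - assert (sumR (map (fun f => chi (P f)) l) <= 1).
    { apply IH; [exact Hnd'|]. intros f g Hf Hg; apply H; auto. }
    lra.
Qed.

Lemma Pin_disj {V F : Type} (fv : F -> corner -> V) pos v N j f g :
  embedded fv pos -> f <> g -> ~ (Pin fv pos v N j f /\ Pin fv pos v N j g).
Proof.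
  intros Hem Hfg [[e1 [He1 H1]] [e2 [He2 H2]]].
  destruct (Hem f g Hfg) as [Hd _].
  set (e := Rmin e1 e2 / 2).
  assert (0 < e < e1 /\ 0 < e < e2).
  { unfold e. pose proof (Rmin_l e1 e2). pose proof (Rmin_r e1 e2).
    assert (0 < Rmin e1 e2) by (apply Rmin_glb_lt; lra). lra. }
  apply (Hd (fst (pos v) + e * fst (dir N j), snd (pos v) + e * snd (dir N j))).
  unfold open_kite. split; left; [apply H1| apply H2]; lra.
Qed.

Theorem lemma5p11 :
  forall alpha0 : R, 0 < alpha0 <= PI / 2 ->
  exists C5 : R,
    forall (V F : Type) (white : V -> bool) (fv : F -> corner -> V)
           (pos : V -> pt) (r : V -> R) (alpha : F -> R),
      is_bquad_graph white fv ->
      admissible white fv alpha0 alpha ->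
      circle_pattern white fv alpha pos r ->
      embedded fv pos ->
      forall (v : V) (fs : list F) (ys : list V),
        white v = true -> star fv v fs ys ->
        sumR (map (conductance fv alpha r) fs) <= C5.
Proof.
  intros alpha0 Ha0. exists (12 * PI / sin alpha0).
  intros V F white fv pos r alpha hbq adm cp emb v fs ys Hwv Hst.
  pose proof PI_RGT_0 as Hpi.
  assert (Hsa0 : 0 < sin alpha0) by (apply sin_gt_0; lra).
  destruct Hst as [Hlen [_ [Hnd [_ [_ Hnth]]]]].
  set (N := length fs) in *.
  assert (HNr : 1 <= INR N) by (apply (le_INR 1); lia).
  set (K := 4 * PI / (INR N * sin alpha0)).
  assert (HK : 0 <= K).
  { unfold K. left. apply Rdiv_lt_0_compat; [lra| apply Rmult_lt_0_compat; lra]. }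
  eapply Rle_trans.
  { apply (sumR_map_le _ (fun f => K * (sumn (2 * N) (ind fv pos v N f) + 1))).
    intros f Hf. apply (face_bound alpha0 Ha0 V F white fv pos r alpha hbq adm cp v f N); auto.
    destruct (In_nth_error fs f Hf) as [k Hk].
    destruct (Hnth k f Hk) as [i [Hi _]]. exists i; exact Hi. }
  rewrite sumR_affine, sumR_sumn. fold N.
  assert (Hs : sumn (2 * N) (fun j => sumR (map (fun f => ind fv pos v N f j) fs)) <= INR (2 * N)).
  { rewrite <- sumn_const. apply sumn_le. intro j.
    apply (at_most_one (fun f => Pin fv pos v N j f)); auto.
    intros f g _ _ Hfg. apply Pin_disj; auto. }
  rewrite mult_INR in Hs. simpl (INR 2) in Hs.
  apply Rle_trans with (K * (2 * INR N + INR N)).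
  { apply Rmult_le_compat_l; lra. }
  unfold K. right. field. split; lra.
Qed.
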